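(* Let $E_3=(S^*,V_1^*,I_1^*,I_2^* )$ be an endemic equilibrium of the model with all components positive. Define the Jacobian entries (all partial derivatives of $F_1$ at $(S^*,I_1^* )$ and of $F_2$ at $(S^*,I_2^* )$): - $C_{11}=-\frac{\partial F_1}{\partial S}-\frac{\partial F_2}{\partial S}-\lambda$; - $C_{13}=-\frac{\partial F_1}{\partial I_1}$ and $C_{14}=-\frac{\partial F_2}{\partial I_2}$; - $C_{22}=-\mu-kI_2^*$ and $C_{24}=-kV_1^*$; - $C_{31}=\frac{\partial F_1}{\partial S}$ and $C_{33}=\frac{\partial F_1}{\partial I_1}-\alpha_1$; - $C_{41}=\frac{\partial F_2}{\partial S}$, $C_{42}=kI_2^*$ and $C_{44}=\frac{\partial F_2}{\partial I_2}+kV_1^*-\alpha_2$. Let - $c_1=-C_{44}-C_{33}-C_{22}-C_{11}$; - $c_2=-C_{41}C_{14}-C_{42}C_{24}+C_{44}C_{33}+C_{44}C_{22}+C_{44}C_{11}-C_{31}C_{13}+C_{33}C_{22}+C_{33}C_{11}+C_{22}C_{11}$; - $c_3=-rC_{42}C_{14}+C_{41}C_{14}C_{33}+C_{41}C_{14}C_{22}+C_{42}C_{24}C_{33}+C_{42}C_{24}C_{11}+C_{44}C_{31}C_{13}-C_{44}C_{33}C_{22}-C_{44}C_{33}C_{11}-C_{44}C_{22}C_{11}+C_{31}C_{13}C_{22}-C_{33}C_{22}C_{11}$; - $c_4=rC_{42}C_{14}C_{33}-C_{41}C_{14}C_{33}C_{22}+C_{42}C_{24}C_{31}C_{13}-C_{42}C_{24}C_{33}C_{11}-C_{44}C_{31}C_{13}C_{22}+C_{44}C_{33}C_{22}C_{11}$.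 If $c_1c_2-c_3>0$ and $c_1c_2c_3-c_3^2-c_1^2c_4>0$, then $E_3$ is locally asymptotically stable.
   Context: The model is $\dot S=\Lambda-F_1(S,I_1)-F_2(S,I_2)-\lambda S$, $\dot V_1=rS-(\mu+kI_2)V_1$, $\dot I_1=F_1(S,I_1)-\alpha_1I_1$, $\dot I_2=F_2(S,I_2)+kI_2V_1-\alpha_2I_2$ on $\mathbb{R}^4_+$. The constants $\Lambda,\mu,r,k,\gamma_1,\gamma_2>0$ and $v_1,v_2\ge0$; $\lambda=r+\mu$ and $\alpha_i=\gamma_i+v_i+\mu$. For $i=1,2$ the incidence functions satisfy: - (H1) $F_i(S,I_i)=I_if_i(S,I_i)$ with $F_i,f_i\in C^2(\mathbb{R}^2_+,\mathbb{R}_+)$ and $F_i(0,I_i)=F_i(S,0)=0$; - (H2) $\partial f_i/\partial S>0$ and $\partial f_i/\partial I_i\le0$; - (H3) $\lim_{I_i\to0^+}F_i(S,I_i)/I_i$ exists and is positive for $S>0$. *)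

(* Defs.v *)
From Stdlib Require Import Reals.
From Coquelicot Require Import Coquelicot.
Open Scope R_scope.

Definition D1 (F : R -> R -> R) (x y : R) : R := Derive (fun u => F u y) x.
Definition D2 (F : R -> R -> R) (x y : R) : R := Derive (fun v => F x v) y.

Definition C2_quadrant (F : R -> R -> R) : Prop :=
  forall x y, 0 <= x -> 0 <= y ->
    ex_derive (fun u => F u y) x /\ ex_derive (fun v => F x v) y /\
    ex_derive (fun u => D1 F u y) x /\ ex_derive (fun v => D1 F x v) y /\
    ex_derive (fun u => D2 F u y) x /\ ex_derive (fun v => D2 F x v) y /\
    continuity_2d_pt F x y /\
    continuity_2d_pt (D1 F) x y /\ continuity_2d_pt (D2 F) x y /\
    continuity_2d_pt (D1 (D1 F)) x y /\ continuity_2d_pt (D2 (D1 F)) x y /\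
    continuity_2d_pt (D1 (D2 F)) x y /\ continuity_2d_pt (D2 (D2 F)) x y.

Definition incidence_hyp (F f : R -> R -> R) : Prop :=
  (forall S I, 0 <= S -> 0 <= I -> F S I = I * f S I) /\
  C2_quadrant F /\ C2_quadrant f /\
  (forall S I, 0 <= S -> 0 <= I -> 0 <= F S I /\ 0 <= f S I) /\
  (forall I, 0 <= I -> F 0 I = 0) /\
  (forall S, 0 <= S -> F S 0 = 0) /\
  (forall S I, 0 <= S -> 0 <= I -> D1 f S I > 0 /\ D2 f S I <= 0) /\
  (forall S, 0 < S -> exists L, L > 0 /\
       filterlim (fun I => F S I / I) (at_right 0) (locally L)).

(** Right-hand side of the model; lam = r + mu, alpha_i = gamma_i + v_i + mu. *)
Definition rhsS Lam mu r (F1 F2 : R -> R -> R) S I1 I2 : R :=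
  Lam - F1 S I1 - F2 S I2 - (r + mu) * S.
Definition rhsV mu r k S V1 I2 : R := r * S - (mu + k * I2) * V1.
Definition rhsI1 mu g1 v1 (F1 : R -> R -> R) S I1 : R :=
  F1 S I1 - (g1 + v1 + mu) * I1.
Definition rhsI2 mu k g2 v2 (F2 : R -> R -> R) S V1 I2 : R :=
  F2 S I2 + k * I2 * V1 - (g2 + v2 + mu) * I2.

Definition is_solution Lam mu r k g1 g2 v1 v2 (F1 F2 : R -> R -> R)
    (S V1 I1 I2 : R -> R) : Prop :=
  forall t, 0 <= t ->
    is_derive S t (rhsS Lam mu r F1 F2 (S t) (I1 t) (I2 t)) /\
    is_derive V1 t (rhsV mu r k (S t) (V1 t) (I2 t)) /\
    is_derive I1 t (rhsI1 mu g1 v1 F1 (S t) (I1 t)) /\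
    is_derive I2 t (rhsI2 mu k g2 v2 F2 (S t) (V1 t) (I2 t)).

Definition dist4 (a b c d a' b' c' d' : R) : R :=
  sqrt ((a - a')^2 + (b - b')^2 + (c - c')^2 + (d - d')^2).

Definition locally_asymptotically_stable Lam mu r k g1 g2 v1 v2
    (F1 F2 : R -> R -> R) (Ss Vs I1s I2s : R) : Prop :=
  (forall eps, eps > 0 -> exists del, del > 0 /\
     forall S V1 I1 I2 : R -> R,
       is_solution Lam mu r k g1 g2 v1 v2 F1 F2 S V1 I1 I2 ->
       0 <= S 0 -> 0 <= V1 0 -> 0 <= I1 0 -> 0 <= I2 0 ->
       dist4 (S 0) (V1 0) (I1 0) (I2 0) Ss Vs I1s I2s < del ->
       forall t, 0 <= t -> dist4 (S t) (V1 t) (I1 t) (I2 t) Ss Vs I1s I2s < eps) /\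
  (exists del, del > 0 /\
     forall S V1 I1 I2 : R -> R,
       is_solution Lam mu r k g1 g2 v1 v2 F1 F2 S V1 I1 I2 ->
       0 <= S 0 -> 0 <= V1 0 -> 0 <= I1 0 -> 0 <= I2 0 ->
       dist4 (S 0) (V1 0) (I1 0) (I2 0) Ss Vs I1s I2s < del ->
       is_lim S p_infty Ss /\ is_lim V1 p_infty Vs /\
       is_lim I1 p_infty I1s /\ is_lim I2 p_infty I2s).

(* Main.v *)
Require Import Defs.
From Stdlib Require Import Reals.
From Coquelicot Require Import Coquelicot.
From Stdlib Require Import Lra Psatz Classical.
Open Scope R_scope.

Lemma DL1 f x y dx dy : DL_pol 1 f x y dx dy = f x y + Derive (fun u => f u y) x * dx + Derive (fun v => f x v) y * dy.
intros. unfold DL_pol, differential. simpl. unfold partial_derive. simpl. unfold Binomial.C; simpl. field.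
Qed.

Record v4 := V4 { p0 : R; p1 : R; p2 : R; p3 : R }.
Record m4 := M4 { a00 : R; a01 : R; a02 : R; a03 : R;
                  a10 : R; a11 : R; a12 : R; a13 : R;
                  a20 : R; a21 : R; a22 : R; a23 : R;
                  a30 : R; a31 : R; a32 : R; a33 : R }.
Definition dot (a b : v4) := p0 a * p0 b + p1 a * p1 b + p2 a * p2 b + p3 a * p3 b.
Definition mv (M : m4) (x : v4) : v4 :=
  V4 (a00 M * p0 x + a01 M * p1 x + a02 M * p2 x + a03 M * p3 x)
     (a10 M * p0 x + a11 M * p1 x + a12 M * p2 x + a13 M * p3 x)
     (a20 M * p0 x + a21 M * p1 x + a22 M * p2 x + a23 M * p3 x)
     (a30 M * p0 x + a31 M * p1 x + a32 M * p2 x + a33 M * p3 x).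
Definition tv (M : m4) (w : v4) : v4 :=
  V4 (p0 w * a00 M + p1 w * a10 M + p2 w * a20 M + p3 w * a30 M)
     (p0 w * a01 M + p1 w * a11 M + p2 w * a21 M + p3 w * a31 M)
     (p0 w * a02 M + p1 w * a12 M + p2 w * a22 M + p3 w * a32 M)
     (p0 w * a03 M + p1 w * a13 M + p2 w * a23 M + p3 w * a33 M).
Lemma dot_tv M w x : dot (tv M w) x = dot w (mv M x).
Proof. destruct M, w, x; unfold dot, tv, mv; simpl; ring. Qed.
Definition m2 a b c d := a * d - b * c.
Definition m3 a b c d e f g h i := a * (e * i - f * h) - b * (d * i - f * g) + c * (d * h - e * g).
Definition kp1 M := - (a00 M + a11 M + a22 M + a33 M).
Definition kp2 M := m2 (a00 M) (a01 M) (a10 M) (a11 M) + m2 (a00 M) (a02 M) (a20 M) (a22 M)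
  + m2 (a00 M) (a03 M) (a30 M) (a33 M) + m2 (a11 M) (a12 M) (a21 M) (a22 M)
  + m2 (a11 M) (a13 M) (a31 M) (a33 M) + m2 (a22 M) (a23 M) (a32 M) (a33 M).
Definition kp3 M := - (
   m3 (a00 M) (a01 M) (a02 M) (a10 M) (a11 M) (a12 M) (a20 M) (a21 M) (a22 M)
 + m3 (a00 M) (a01 M) (a03 M) (a10 M) (a11 M) (a13 M) (a30 M) (a31 M) (a33 M)
 + m3 (a00 M) (a02 M) (a03 M) (a20 M) (a22 M) (a23 M) (a30 M) (a32 M) (a33 M)
 + m3 (a11 M) (a12 M) (a13 M) (a21 M) (a22 M) (a23 M) (a31 M) (a32 M) (a33 M)).
Definition kp4 M :=
   a00 M * m3 (a11 M) (a12 M) (a13 M) (a21 M) (a22 M) (a23 M) (a31 M) (a32 M) (a33 M)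
 - a01 M * m3 (a10 M) (a12 M) (a13 M) (a20 M) (a22 M) (a23 M) (a30 M) (a32 M) (a33 M)
 + a02 M * m3 (a10 M) (a11 M) (a13 M) (a20 M) (a21 M) (a23 M) (a30 M) (a31 M) (a33 M)
 - a03 M * m3 (a10 M) (a11 M) (a12 M) (a20 M) (a21 M) (a22 M) (a30 M) (a31 M) (a32 M).
Lemma CH M w x :
  dot (tv M (tv M (tv M (tv M w)))) x =
  - (kp1 M * dot (tv M (tv M (tv M w))) x + kp2 M * dot (tv M (tv M w)) x
     + kp3 M * dot (tv M w) x + kp4 M * dot w x).
Proof. destruct M, w, x; unfold dot, tv, kp1, kp2, kp3, kp4, m2, m3; simpl; ring. Qed.

Definition vadd (a b : v4) := V4 (p0 a + p0 b) (p1 a + p1 b) (p2 a + p2 b) (p3 a + p3 b).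
Definition vsc (c : R) (a : v4) := V4 (c * p0 a) (c * p1 a) (c * p2 a) (c * p3 a).
Definition N4 (x : v4) := p0 x ^ 2 + p1 x ^ 2 + p2 x ^ 2 + p3 x ^ 2.

Lemma dot_vadd a b x : dot (vadd a b) x = dot a x + dot b x.
Proof. destruct a, b, x; unfold dot, vadd; simpl; ring. Qed.
Lemma dot_vsc c a x : dot (vsc c a) x = c * dot a x.
Proof. destruct a, x; unfold dot, vsc; simpl; ring. Qed.
Lemma dot_vadd_r a x y : dot a (vadd x y) = dot a x + dot a y.
Proof. destruct a, x, y; unfold dot, vadd; simpl; ring. Qed.
Lemma dot_vsc_r c a x : dot a (vsc c x) = c * dot a x.
Proof. destruct a, x; unfold dot, vsc; simpl; ring. Qed.

Lemma cs u x : (dot u x) ^ 2 <= N4 u * N4 x.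
Proof.
  destruct u as [u0 u1 u2 u3], x as [x0 x1 x2 x3]; unfold dot, N4; simpl.
  assert (H : (u0^2+u1^2+u2^2+u3^2)*(x0^2+x1^2+x2^2+x3^2) - (u0*x0+u1*x1+u2*x2+u3*x3)^2
    = (u0*x1-u1*x0)^2 + (u0*x2-u2*x0)^2 + (u0*x3-u3*x0)^2 + (u1*x2-u2*x1)^2
      + (u1*x3-u3*x1)^2 + (u2*x3-u3*x2)^2) by ring.
  assert (0 <= (u0*x1-u1*x0)^2 + (u0*x2-u2*x0)^2 + (u0*x3-u3*x0)^2 + (u1*x2-u2*x1)^2
      + (u1*x3-u3*x1)^2 + (u2*x3-u3*x2)^2).
  { repeat apply Rplus_le_le_0_compat; apply pow2_ge_0. }
  lra.
Qed.

Definition sq4 (g0 g1 g2 g3 : R) (u0 u1 u2 u3 : v4) (x : v4) :=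
  g0 * (dot u0 x) ^ 2 + g1 * (dot u1 x) ^ 2 + g2 * (dot u2 x) ^ 2 + g3 * (dot u3 x) ^ 2.
Definition bl4 (g0 g1 g2 g3 : R) (u0 u1 u2 u3 : v4) (x v : v4) :=
  g0 * dot u0 x * dot u0 v + g1 * dot u1 x * dot u1 v + g2 * dot u2 x * dot u2 v
  + g3 * dot u3 x * dot u3 v.

Lemma bl4_diag g0 g1 g2 g3 u0 u1 u2 u3 x :
  bl4 g0 g1 g2 g3 u0 u1 u2 u3 x x = sq4 g0 g1 g2 g3 u0 u1 u2 u3 x.
Proof. unfold bl4, sq4; ring. Qed.

Lemma bl4_add g0 g1 g2 g3 u0 u1 u2 u3 x v v' :
  bl4 g0 g1 g2 g3 u0 u1 u2 u3 x (vadd v v') =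
  bl4 g0 g1 g2 g3 u0 u1 u2 u3 x v + bl4 g0 g1 g2 g3 u0 u1 u2 u3 x v'.
Proof. unfold bl4; rewrite !dot_vadd_r; ring. Qed.

Lemma bl4_sc g0 g1 g2 g3 u0 u1 u2 u3 x c v :
  bl4 g0 g1 g2 g3 u0 u1 u2 u3 x (vsc c v) = c * bl4 g0 g1 g2 g3 u0 u1 u2 u3 x v.
Proof. unfold bl4; rewrite !dot_vsc_r; ring. Qed.

Lemma amgm1 g a b t : 0 <= g -> 0 < t -> 2 * (g * a * b) <= t * (g * a ^ 2) + g * b ^ 2 / t.
Proof.
  intros Hg Ht.
  assert (E : t * (g * a ^ 2) + g * b ^ 2 / t - 2 * (g * a * b) = g * ((t * a - b) ^ 2) / t)
    by (field; lra).
  assert (0 <= g * ((t * a - b) ^ 2) / t).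
  { apply Rmult_le_pos; [apply Rmult_le_pos; [lra| apply pow2_ge_0]| left; apply Rinv_0_lt_compat; lra]. }
  lra.
Qed.

Lemma bl4_amgm g0 g1 g2 g3 u0 u1 u2 u3 x v t :
  0 <= g0 -> 0 <= g1 -> 0 <= g2 -> 0 <= g3 -> 0 < t ->
  2 * bl4 g0 g1 g2 g3 u0 u1 u2 u3 x v <=
  t * sq4 g0 g1 g2 g3 u0 u1 u2 u3 x + sq4 g0 g1 g2 g3 u0 u1 u2 u3 v / t.
Proof.
  intros H0 H1 H2 H3 Ht. unfold bl4, sq4.
  pose proof (amgm1 g0 (dot u0 x) (dot u0 v) t H0 Ht).
  pose proof (amgm1 g1 (dot u1 x) (dot u1 v) t H1 Ht).
  pose proof (amgm1 g2 (dot u2 x) (dot u2 v) t H2 Ht).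
  pose proof (amgm1 g3 (dot u3 x) (dot u3 v) t H3 Ht).
  assert (E : forall a b c d, (a + b + c + d) / t = a / t + b / t + c / t + d / t)
    by (intros; field; lra).
  rewrite E. lra.
Qed.

Lemma sq4_upper g0 g1 g2 g3 u0 u1 u2 u3 v :
  0 <= g0 -> 0 <= g1 -> 0 <= g2 -> 0 <= g3 ->
  sq4 g0 g1 g2 g3 u0 u1 u2 u3 v <=
  (g0 * N4 u0 + g1 * N4 u1 + g2 * N4 u2 + g3 * N4 u3) * N4 v.
Proof.
  intros. unfold sq4.
  pose proof (cs u0 v); pose proof (cs u1 v); pose proof (cs u2 v); pose proof (cs u3 v).
  assert (g0 * dot u0 v ^ 2 <= g0 * (N4 u0 * N4 v)) by (apply Rmult_le_compat_l; auto).
  assert (g1 * dot u1 v ^ 2 <= g1 * (N4 u1 * N4 v)) by (apply Rmult_le_compat_l; auto).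
  assert (g2 * dot u2 v ^ 2 <= g2 * (N4 u2 * N4 v)) by (apply Rmult_le_compat_l; auto).
  assert (g3 * dot u3 v ^ 2 <= g3 * (N4 u3 * N4 v)) by (apply Rmult_le_compat_l; auto).
  lra.
Qed.

Lemma sq4_lower g0 g1 g2 g3 u0 u1 u2 u3 v :
  0 <= g0 -> 0 <= g1 -> 0 <= g2 -> 0 <= g3 ->
  g0 * (dot u0 v) ^ 2 <= sq4 g0 g1 g2 g3 u0 u1 u2 u3 v.
Proof.
  intros. unfold sq4.
  assert (0 <= g1 * dot u1 v ^ 2) by (apply Rmult_le_pos; auto; apply pow2_ge_0).
  assert (0 <= g2 * dot u2 v ^ 2) by (apply Rmult_le_pos; auto; apply pow2_ge_0).
  assert (0 <= g3 * dot u3 v ^ 2) by (apply Rmult_le_pos; auto; apply pow2_ge_0).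
  lra.
Qed.

Lemma isd_plus (f g : R -> R) x a b : is_derive f x a -> is_derive g x b ->
  is_derive (fun y => f y + g y) x (a + b).
Proof. intros Hf Hg. exact (is_derive_plus f g x a b Hf Hg). Qed.
Lemma isd_minus (f g : R -> R) x a b : is_derive f x a -> is_derive g x b ->
  is_derive (fun y => f y - g y) x (a - b).
Proof. intros Hf Hg. exact (is_derive_minus f g x a b Hf Hg). Qed.
Lemma isd_mult (f g : R -> R) x a b : is_derive f x a -> is_derive g x b ->
  is_derive (fun y => f y * g y) x (a * g x + f x * b).
Proof. intros Hf Hg. apply (is_derive_mult f g x a b Hf Hg). intros; apply Rmult_comm. Qed.
Lemma isd_scal (f : R -> R) x c a : is_derive f x a ->
  is_derive (fun y => c * f y) x (c * a).
Proof. intros Hf. exact (is_derive_scal f x c a Hf). Qed.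
Lemma isd_const x c : is_derive (fun _ : R => c) x 0.
Proof. exact (is_derive_const c x). Qed.

Lemma dot_derive (u : v4) (e e' : R -> v4) t :
  is_derive (fun s => p0 (e s)) t (p0 (e' t)) ->
  is_derive (fun s => p1 (e s)) t (p1 (e' t)) ->
  is_derive (fun s => p2 (e s)) t (p2 (e' t)) ->
  is_derive (fun s => p3 (e s)) t (p3 (e' t)) ->
  is_derive (fun s => dot u (e s)) t (dot u (e' t)).
Proof.
  intros H0 H1 H2 H3. unfold dot.
  apply isd_plus; [apply isd_plus; [apply isd_plus|]|]; apply isd_scal; assumption.
Qed.

Lemma sqt_derive g (h : R -> R) t a : is_derive h t a ->
  is_derive (fun s => g * (h s) ^ 2) t (2 * (g * h t * a)).
Proof.
  intros H.
  apply is_derive_ext with (f := fun s => g * (h s * h s)).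
  { intros s. simpl. ring. }
  replace (2 * (g * h t * a)) with (g * (a * h t + h t * a)) by ring.
  apply isd_scal. apply isd_mult; assumption.
Qed.

Lemma sq4_derive g0 g1 g2 g3 u0 u1 u2 u3 (e e' : R -> v4) t :
  is_derive (fun s => p0 (e s)) t (p0 (e' t)) ->
  is_derive (fun s => p1 (e s)) t (p1 (e' t)) ->
  is_derive (fun s => p2 (e s)) t (p2 (e' t)) ->
  is_derive (fun s => p3 (e s)) t (p3 (e' t)) ->
  is_derive (fun s => sq4 g0 g1 g2 g3 u0 u1 u2 u3 (e s)) t
            (2 * bl4 g0 g1 g2 g3 u0 u1 u2 u3 (e t) (e' t)).
Proof.
  intros H0 H1 H2 H3.
  pose proof (dot_derive u0 e e' t H0 H1 H2 H3) as D0.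
  pose proof (dot_derive u1 e e' t H0 H1 H2 H3) as D1.
  pose proof (dot_derive u2 e e' t H0 H1 H2 H3) as D2.
  pose proof (dot_derive u3 e e' t H0 H1 H2 H3) as D3.
  unfold sq4.
  replace (2 * bl4 g0 g1 g2 g3 u0 u1 u2 u3 (e t) (e' t)) with
    (2 * (g0 * dot u0 (e t) * dot u0 (e' t)) + 2 * (g1 * dot u1 (e t) * dot u1 (e' t)) +
     2 * (g2 * dot u2 (e t) * dot u2 (e' t)) + 2 * (g3 * dot u3 (e t) * dot u3 (e' t)))
    by (unfold bl4; ring).
  apply isd_plus; [apply isd_plus; [apply isd_plus|]|]; apply sqt_derive; assumption.
Qed.

Definition bt3 M := (kp1 M * kp2 M - kp3 M) / kp1 M.
Definition bt1 M := kp4 M / bt3 M.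
Definition qq M := kp3 M / kp1 M.
Definition bt2 M := qq M - bt1 M.
Definition G0 M := bt1 M * bt2 M * bt3 M.
Definition G1 M := bt2 M * bt3 M.
Definition G2 M := bt3 M.
Definition uu0 (M : m4) (w : v4) := w.
Definition uu1 M w := tv M w.
Definition uu2 M w := vadd (tv M (tv M w)) (vsc (bt1 M) w).
Definition uu3 M w := vadd (tv M (tv M (tv M w))) (vsc (qq M) (tv M w)).
Definition Wq M w x := sq4 (G0 M) (G1 M) (G2 M) 1 (uu0 M w) (uu1 M w) (uu2 M w) (uu3 M w) x.
Definition Bq M w x v := bl4 (G0 M) (G1 M) (G2 M) 1 (uu0 M w) (uu1 M w) (uu2 M w) (uu3 M w) x v.
Definition e0 := V4 1 0 0 0.
Definition e1 := V4 0 1 0 0.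
Definition e2 := V4 0 0 1 0.
Definition e3 := V4 0 0 0 1.
Definition WW M x := Wq M e0 x + Wq M e1 x + Wq M e2 x + Wq M e3 x.
Definition DB M x v := Bq M e0 x v + Bq M e1 x v + Bq M e2 x v + Bq M e3 x v.

Definition RH M := 0 < kp1 M /\ 0 < kp1 M * kp2 M - kp3 M /\
  0 < kp3 M * (kp1 M * kp2 M - kp3 M) - kp1 M ^ 2 * kp4 M /\ 0 < kp4 M.

Lemma RH_pos M : RH M -> 0 < G0 M /\ 0 < G1 M /\ 0 < G2 M.
Proof.
  intros [H1 [H2 [H3 H4]]].
  assert (Hb3 : 0 < bt3 M) by (unfold bt3; apply Rdiv_lt_0_compat; lra).
  assert (Hb1 : 0 < bt1 M) by (unfold bt1; apply Rdiv_lt_0_compat; lra).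
  assert (Hb2 : 0 < bt2 M).
  { unfold bt2, qq, bt1, bt3.
    replace (kp3 M / kp1 M - kp4 M / ((kp1 M * kp2 M - kp3 M) / kp1 M)) with
      ((kp3 M * (kp1 M * kp2 M - kp3 M) - kp1 M ^ 2 * kp4 M) / (kp1 M * (kp1 M * kp2 M - kp3 M)))
      by (field; lra).
    apply Rdiv_lt_0_compat; [lra | apply Rmult_lt_0_compat; lra]. }
  unfold G0, G1, G2; split; [|split]; [apply Rmult_lt_0_compat; [apply Rmult_lt_0_compat|] | apply Rmult_lt_0_compat | ]; assumption.
Qed.

Lemma schwarz d1 d2 d3 d4 y0 y1 y2 y3 y4 :
  d1 <> 0 -> d1 * d2 - d3 <> 0 ->
  y4 = - (d1 * y3 + d2 * y2 + d3 * y1 + d4 * y0) ->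
  let b3 := (d1 * d2 - d3) / d1 in
  let b1 := d4 / b3 in
  let q := d3 / d1 in
  let b2 := q - b1 in
  b1 * b2 * b3 * y0 * y1 + b2 * b3 * y1 * y2 + b3 * (y2 + b1 * y0) * (y3 + b1 * y1)
  + 1 * (y3 + q * y1) * (y4 + q * y2) = - d1 * (y3 + q * y1) ^ 2.
Proof.
  intros Hd1 Hd2 Hy4 b3 b1 q b2. subst y4. unfold b2, b1, q, b3. field. repeat split; auto.
Qed.

Lemma Bq_neg M w x : RH M -> Bq M w x (mv M x) <= 0.
Proof.
  intros HR. pose proof HR as [H1 [H2 [H3 H4]]].
  assert (E : Bq M w x (mv M x) = - kp1 M * (dot (tv M (tv M (tv M w))) x + qq M * dot (tv M w) x) ^ 2).
  { unfold Bq, bl4, uu0, uu1, uu2, uu3.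
    rewrite !dot_vadd, !dot_vsc, <- !dot_tv.
    pose proof (CH M w x) as HC.
    pose proof (schwarz (kp1 M) (kp2 M) (kp3 M) (kp4 M) (dot w x) (dot (tv M w) x)
      (dot (tv M (tv M w)) x) (dot (tv M (tv M (tv M w))) x) (dot (tv M (tv M (tv M (tv M w)))) x)
      ltac:(lra) ltac:(lra) HC) as HS.
    unfold G0, G1, G2, bt2, bt1, qq, bt3. simpl in HS. lra. }
  rewrite E.
  assert (0 <= (dot (tv M (tv M (tv M w))) x + qq M * dot (tv M w) x) ^ 2) by apply pow2_ge_0.
  nra.
Qed.

Lemma DB_neg M x : RH M -> DB M x (mv M x) <= 0.
Proof.
  intros HR. unfold DB.
  pose proof (Bq_neg M e0 x HR); pose proof (Bq_neg M e1 x HR);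
  pose proof (Bq_neg M e2 x HR); pose proof (Bq_neg M e3 x HR). lra.
Qed.

Lemma WW_lower M x : RH M -> G0 M * N4 x <= WW M x.
Proof.
  intros HR. destruct (RH_pos M HR) as [P0 [P1 P2]].
  unfold WW, Wq.
  pose proof (sq4_lower (G0 M) (G1 M) (G2 M) 1 (uu0 M e0) (uu1 M e0) (uu2 M e0) (uu3 M e0) x ltac:(lra) ltac:(lra) ltac:(lra) ltac:(lra)).
  pose proof (sq4_lower (G0 M) (G1 M) (G2 M) 1 (uu0 M e1) (uu1 M e1) (uu2 M e1) (uu3 M e1) x ltac:(lra) ltac:(lra) ltac:(lra) ltac:(lra)).
  pose proof (sq4_lower (G0 M) (G1 M) (G2 M) 1 (uu0 M e2) (uu1 M e2) (uu2 M e2) (uu3 M e2) x ltac:(lra) ltac:(lra) ltac:(lra) ltac:(lra)).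
  pose proof (sq4_lower (G0 M) (G1 M) (G2 M) 1 (uu0 M e3) (uu1 M e3) (uu2 M e3) (uu3 M e3) x ltac:(lra) ltac:(lra) ltac:(lra) ltac:(lra)).
  unfold uu0 in *.
  assert (E : G0 M * N4 x = G0 M * dot e0 x ^ 2 + G0 M * dot e1 x ^ 2 + G0 M * dot e2 x ^ 2 + G0 M * dot e3 x ^ 2)
    by (destruct x; unfold N4, dot, e0, e1, e2, e3; simpl; ring).
  lra.
Qed.

Definition Kq M w := G0 M * N4 (uu0 M w) + G1 M * N4 (uu1 M w) + G2 M * N4 (uu2 M w) + 1 * N4 (uu3 M w).
Definition KW M := Kq M e0 + Kq M e1 + Kq M e2 + Kq M e3.

Lemma WW_upper M x : RH M -> WW M x <= KW M * N4 x.
Proof.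
  intros HR. destruct (RH_pos M HR) as [P0 [P1 P2]].
  unfold WW, Wq, KW, Kq.
  pose proof (sq4_upper (G0 M) (G1 M) (G2 M) 1 (uu0 M e0) (uu1 M e0) (uu2 M e0) (uu3 M e0) x ltac:(lra) ltac:(lra) ltac:(lra) ltac:(lra)).
  pose proof (sq4_upper (G0 M) (G1 M) (G2 M) 1 (uu0 M e1) (uu1 M e1) (uu2 M e1) (uu3 M e1) x ltac:(lra) ltac:(lra) ltac:(lra) ltac:(lra)).
  pose proof (sq4_upper (G0 M) (G1 M) (G2 M) 1 (uu0 M e2) (uu1 M e2) (uu2 M e2) (uu3 M e2) x ltac:(lra) ltac:(lra) ltac:(lra) ltac:(lra)).
  pose proof (sq4_upper (G0 M) (G1 M) (G2 M) 1 (uu0 M e3) (uu1 M e3) (uu2 M e3) (uu3 M e3) x ltac:(lra) ltac:(lra) ltac:(lra) ltac:(lra)).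
  lra.
Qed.

Lemma DB_diag M x : DB M x x = WW M x.
Proof. unfold DB, WW, Bq, Wq. rewrite !bl4_diag. reflexivity. Qed.

Lemma DB_add M x v v' : DB M x (vadd v v') = DB M x v + DB M x v'.
Proof. unfold DB, Bq. rewrite !bl4_add. ring. Qed.

Lemma DB_sc M x c v : DB M x (vsc c v) = c * DB M x v.
Proof. unfold DB, Bq. rewrite !bl4_sc. ring. Qed.

Lemma DB_amgm M x v t : RH M -> 0 < t -> 2 * DB M x v <= t * WW M x + WW M v / t.
Proof.
  intros HR Ht. destruct (RH_pos M HR) as [P0 [P1 P2]].
  unfold DB, WW, Bq, Wq.
  pose proof (bl4_amgm (G0 M) (G1 M) (G2 M) 1 (uu0 M e0) (uu1 M e0) (uu2 M e0) (uu3 M e0) x v t ltac:(lra) ltac:(lra) ltac:(lra) ltac:(lra) Ht).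
  pose proof (bl4_amgm (G0 M) (G1 M) (G2 M) 1 (uu0 M e1) (uu1 M e1) (uu2 M e1) (uu3 M e1) x v t ltac:(lra) ltac:(lra) ltac:(lra) ltac:(lra) Ht).
  pose proof (bl4_amgm (G0 M) (G1 M) (G2 M) 1 (uu0 M e2) (uu1 M e2) (uu2 M e2) (uu3 M e2) x v t ltac:(lra) ltac:(lra) ltac:(lra) ltac:(lra) Ht).
  pose proof (bl4_amgm (G0 M) (G1 M) (G2 M) 1 (uu0 M e3) (uu1 M e3) (uu2 M e3) (uu3 M e3) x v t ltac:(lra) ltac:(lra) ltac:(lra) ltac:(lra) Ht).
  assert (E : forall a b c d, (a + b + c + d) / t = a / t + b / t + c / t + d / t)
    by (intros; field; lra).
  rewrite E. lra.
Qed.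

Lemma WW_derive M (e e' : R -> v4) t :
  is_derive (fun s => p0 (e s)) t (p0 (e' t)) ->
  is_derive (fun s => p1 (e s)) t (p1 (e' t)) ->
  is_derive (fun s => p2 (e s)) t (p2 (e' t)) ->
  is_derive (fun s => p3 (e s)) t (p3 (e' t)) ->
  is_derive (fun s => WW M (e s)) t (2 * DB M (e t) (e' t)).
Proof.
  intros H0 H1 H2 H3. unfold WW, DB, Wq, Bq.
  replace (2 * (bl4 (G0 M) (G1 M) (G2 M) 1 (uu0 M e0) (uu1 M e0) (uu2 M e0) (uu3 M e0) (e t) (e' t) +
     bl4 (G0 M) (G1 M) (G2 M) 1 (uu0 M e1) (uu1 M e1) (uu2 M e1) (uu3 M e1) (e t) (e' t) +
     bl4 (G0 M) (G1 M) (G2 M) 1 (uu0 M e2) (uu1 M e2) (uu2 M e2) (uu3 M e2) (e t) (e' t) +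
     bl4 (G0 M) (G1 M) (G2 M) 1 (uu0 M e3) (uu1 M e3) (uu2 M e3) (uu3 M e3) (e t) (e' t)))
  with (2 * bl4 (G0 M) (G1 M) (G2 M) 1 (uu0 M e0) (uu1 M e0) (uu2 M e0) (uu3 M e0) (e t) (e' t) +
     2 * bl4 (G0 M) (G1 M) (G2 M) 1 (uu0 M e1) (uu1 M e1) (uu2 M e1) (uu3 M e1) (e t) (e' t) +
     2 * bl4 (G0 M) (G1 M) (G2 M) 1 (uu0 M e2) (uu1 M e2) (uu2 M e2) (uu3 M e2) (e t) (e' t) +
     2 * bl4 (G0 M) (G1 M) (G2 M) 1 (uu0 M e3) (uu1 M e3) (uu2 M e3) (uu3 M e3) (e t) (e' t)) by ring.
  apply isd_plus; [apply isd_plus; [apply isd_plus|]|]; apply sq4_derive; assumption.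
Qed.

Lemma cont_eps (f : R -> R) x a : continuity_pt f x -> f x < a ->
  exists eta, 0 < eta /\ forall u, Rabs (u - x) < eta -> f u < a.
Proof.
  intros Hc Hlt.
  destruct (proj1 (continuity_pt_locally f x) Hc (mkposreal (a - f x) ltac:(lra))) as [d Hd].
  exists d. split; [apply cond_pos|]. intros u Hu.
  assert (Hb : ball x d u) by (unfold ball; simpl; unfold AbsRing_ball, abs, minus, plus, opp; simpl; exact Hu).
  specialize (Hd u Hb). simpl in Hd. apply Rabs_lt_between in Hd. lra.
Qed.

Lemma decay_seg (phi phi' : R -> R) sig s :
  0 <= s ->
  (forall t, 0 <= t -> is_derive phi t (phi' t)) ->
  (forall u, 0 < u < s -> phi' u <= - sig * phi u) ->
  phi s * exp (sig * s) <= phi 0.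
Proof.
  intros Hs Hd Hneg.
  destruct (Req_dec s 0) as [E|E].
  { subst. rewrite Rmult_0_r, exp_0. lra. }
  set (g := fun u => phi u * exp (sig * u)).
  set (g' := fun u => phi' u * exp (sig * u) + phi u * (sig * exp (sig * u))).
  assert (Hg : forall c, 0 <= c <= s -> derivable_pt_lim g c (g' c)).
  { intros c Hc. apply is_derive_Reals. unfold g, g'.
    replace (phi' c * exp (sig * c) + phi c * (sig * exp (sig * c))) with
      (phi' c * exp (sig * c) + phi c * (sig * 1 * exp (sig * c))) by ring.
    apply (isd_mult phi (fun u => exp (sig * u))).
    - apply Hd; lra.
    - auto_derive; [exact I| ring]. }
  destruct (MVT_cor2 g g' 0 s ltac:(lra) Hg) as [c [Hc1 Hc2]].
  assert (g' c <= 0).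
  { unfold g'. specialize (Hneg c Hc2). pose proof (exp_pos (sig * c)). nra. }
  unfold g in Hc1. rewrite Rmult_0_r, exp_0, Rmult_1_r in Hc1. nra.
Qed.

Lemma dyn (phi phi' n : R -> R) sig m rho2 :
  0 < sig -> 0 < m -> 0 < rho2 ->
  (forall t, 0 <= t -> is_derive phi t (phi' t)) ->
  (forall t, 0 <= t -> 0 <= n t) ->
  (forall t, 0 <= t -> m * n t <= phi t) ->
  (forall t, 0 <= t -> n t < rho2 -> phi' t <= - sig * phi t) ->
  phi 0 < m * rho2 ->
  forall t, 0 <= t -> phi t * exp (sig * t) <= phi 0.
Proof.
  intros Hsig Hm Hr Hd Hn Hmn Hneg H0 t1 Ht1.
  set (E := fun s => 0 <= s <= t1 /\ forall u, 0 <= u <= s -> phi u < m * rho2).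
  assert (HE0 : E 0).
  { split; [lra|]. intros u Hu. replace u with 0 by lra. exact H0. }
  assert (HEb : bound E).
  { exists t1. intros s [Hs _]. lra. }
  destruct (completeness E HEb (ex_intro _ 0 HE0)) as [ss [Hub Hlub]].
  assert (Hss0 : 0 <= ss) by (apply Hub; exact HE0).
  assert (Hss1 : ss <= t1) by (apply Hlub; intros s [Hs _]; lra).
  assert (Hbelow : forall u, 0 <= u < ss -> phi u < m * rho2).
  { intros u Hu.
    destruct (classic (exists s, E s /\ u <= s)) as [[s [[_ Hs] Hus]]|Hno].
    - apply Hs; lra.
    - exfalso. assert (ss <= u).
      { apply Hlub. intros s Es. destruct (Rle_dec s u); auto.
        exfalso; apply Hno; exists s; split; auto; lra. }
      lra. }
  assert (Hseg : forall s, 0 <= s <= ss -> phi s * exp (sig * s) <= phi 0).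
  { intros s Hs. apply (decay_seg phi phi' sig s); try tauto.
    intros u Hu. apply Hneg; [lra|].
    assert (phi u < m * rho2) by (apply Hbelow; lra).
    pose proof (Hmn u ltac:(lra)). nra. }
  assert (Hphi0 : 0 <= phi 0) by (pose proof (Hmn 0 ltac:(lra)); pose proof (Hn 0 ltac:(lra)); nra).
  assert (Hss_val : phi ss < m * rho2).
  { pose proof (Hseg ss ltac:(lra)).
    assert (1 <= exp (sig * ss)) by (pose proof (exp_ineq1_le (sig * ss)); nra).
    pose proof (Hmn ss Hss0). pose proof (Hn ss Hss0).
    nra. }
  destruct (Req_dec ss t1) as [Eq|Neq].
  { subst ss. apply Hseg; lra. }
  exfalso.
  assert (Hc : continuity_pt phi ss).
  { apply derivable_continuous_pt. exists (phi' ss). apply is_derive_Reals. apply Hd; lra. }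
  destruct (cont_eps phi ss (m * rho2) Hc Hss_val) as [eta [Heta Hu]].
  set (s' := Rmin (ss + eta / 2) t1).
  assert (Es' : E s').
  { split.
    - unfold s'. split; [apply Rmin_case; lra| apply Rmin_r].
    - intros u Hu'. destruct (Rlt_dec u ss).
      + apply Hbelow; lra.
      + apply Hu. assert (u <= ss + eta / 2) by (pose proof (Rmin_l (ss + eta/2) t1); unfold s' in Hu'; lra).
        apply Rabs_lt_between; lra. }
  pose proof (Hub s' Es').
  unfold s' in H. revert H. apply Rmin_case; intros; lra.
Qed.

Lemma max_sq a b : Rmax (Rabs a) (Rabs b) ^ 2 <= a ^ 2 + b ^ 2.
Proof.
  apply Rmax_case.
  - rewrite pow2_abs. pose proof (pow2_ge_0 b). lra.
  - rewrite pow2_abs. pose proof (pow2_ge_0 a). lra.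
Qed.

Lemma taylor_rem (F : R -> R -> R) x0 y0 : 0 < x0 -> 0 < y0 -> C2_quadrant F ->
  exists D dl, 0 <= D /\ 0 < dl /\ forall u v, Rabs (u - x0) < dl -> Rabs (v - y0) < dl ->
    Rabs (F u v - F x0 y0 - D1 F x0 y0 * (u - x0) - D2 F x0 y0 * (v - y0))
      <= D * ((u - x0) ^ 2 + (v - y0) ^ 2).
Proof.
  intros Hx Hy HC.
  assert (Hloc : locally_2d (fun u v => ex_diff_n F 2 u v) x0 y0).
  { exists (mkposreal (Rmin x0 y0) (Rmin_pos _ _ Hx Hy)). simpl. intros u v Hu Hv.
    assert (0 <= u).
    { apply Rabs_lt_between in Hu. pose proof (Rmin_l x0 y0). lra. }
    assert (0 <= v).
    { apply Rabs_lt_between in Hv. pose proof (Rmin_r x0 y0). lra. }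
    destruct (HC u v H H0) as (h1 & h2 & h3 & h4 & h5 & h6 & h7 & h8 & h9 & h10 & h11 & h12 & h13).
    simpl. tauto. }
  destruct (Taylor_Lagrange_2d F 1 x0 y0 Hloc) as [D [d Hd]].
  exists (Rabs D), d. split; [apply Rabs_pos|]. split; [apply cond_pos|].
  intros u v Hu Hv. specialize (Hd u v Hu Hv). rewrite DL1 in Hd.
  replace (F u v - F x0 y0 - D1 F x0 y0 * (u - x0) - D2 F x0 y0 * (v - y0)) with
    (F u v - (F x0 y0 + Derive (fun u0 : R => F u0 y0) x0 * (u - x0) + Derive (fun v0 : R => F x0 v0) y0 * (v - y0)))
    by (unfold D1, D2; ring).
  eapply Rle_trans; [exact Hd|].
  pose proof (max_sq (u - x0) (v - y0)).
  assert (0 <= Rmax (Rabs (u - x0)) (Rabs (v - y0)) ^ 2) by apply pow2_ge_0.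
  assert (D <= Rabs D) by apply Rle_abs.
  pose proof (Rabs_pos D).
  simpl in *. nra.
Qed.

Lemma locally_pos (x : R) : 0 < x -> locally x (fun y : R => 0 < y).
Proof.
  intros Hx. exists (mkposreal x Hx). intros y Hy.
  unfold ball in Hy; simpl in Hy; unfold AbsRing_ball, abs, minus, plus, opp in Hy; simpl in Hy.
  apply Rabs_lt_between in Hy. lra.
Qed.

Lemma D1_rel F f S I : incidence_hyp F f -> 0 < S -> 0 < I -> D1 F S I = I * D1 f S I.
Proof.
  intros (H1 & _ & _ & _ & _ & _ & _ & _) HS HI.
  unfold D1.
  rewrite (Derive_ext_loc (fun u => F u I) (fun u => I * f u I)).
  - apply Derive_scal.
  - eapply filter_imp; [|apply (locally_pos S HS)]. intros y Hy. simpl. apply H1; lra.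
Qed.

Lemma D2_rel F f S I : incidence_hyp F f -> 0 < S -> 0 < I -> D2 F S I = f S I + I * D2 f S I.
Proof.
  intros (H1 & _ & Hf & _ & _ & _ & _ & _) HS HI.
  unfold D2.
  rewrite (Derive_ext_loc (fun v => F S v) (fun v => id v * f S v)).
  - rewrite Derive_mult.
    + rewrite Derive_id. unfold id. change (fun v : R => f S v) with (f S). ring.
    + apply ex_derive_id.
    + destruct (Hf S I ltac:(lra) ltac:(lra)) as (_ & h & _). exact h.
  - eapply filter_imp; [|apply (locally_pos I HI)]. intros y Hy. simpl. unfold id. apply H1; lra.
Qed.

Lemma cont_pos (h : R -> R) : continuity_pt h 0 -> 0 < h 0 ->
  exists eta, 0 < eta /\ forall u, 0 <= u < eta -> 0 < h u.
Proof.
  intros Hc Hp.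
  destruct (proj1 (continuity_pt_locally h 0) Hc (mkposreal (h 0) Hp)) as [d Hd].
  exists d. split; [apply cond_pos|]. intros u Hu.
  assert (Hb : ball 0 d u).
  { unfold ball; simpl; unfold AbsRing_ball, abs, minus, plus, opp; simpl.
    rewrite Ropp_0, Rplus_0_r, Rabs_right; lra. }
  specialize (Hd u Hb). simpl in Hd. apply Rabs_lt_between in Hd. lra.
Qed.

Definition Bm (C11 C13 C14 r C22 C24 C31 C33 C41 C42 C44 s : R) : m4 :=
  M4 (C11 + s) 0 C13 C14  r (C22 + s) 0 C24  C31 0 (C33 + s) 0  C41 C42 0 (C44 + s).

Definition cc1 (C11 C13 C14 r C22 C24 C31 C33 C41 C42 C44 : R) := - C44 - C33 - C22 - C11.
Definition cc2 (C11 C13 C14 r C22 C24 C31 C33 C41 C42 C44 : R) :=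
  - C41 * C14 - C42 * C24 + C44 * C33 + C44 * C22 + C44 * C11
            - C31 * C13 + C33 * C22 + C33 * C11 + C22 * C11.
Definition cc3 (C11 C13 C14 r C22 C24 C31 C33 C41 C42 C44 : R) :=
  - r * C42 * C14 + C41 * C14 * C33 + C41 * C14 * C22
            + C42 * C24 * C33 + C42 * C24 * C11 + C44 * C31 * C13
            - C44 * C33 * C22 - C44 * C33 * C11 - C44 * C22 * C11
            + C31 * C13 * C22 - C33 * C22 * C11.
Definition cc4 (C11 C13 C14 r C22 C24 C31 C33 C41 C42 C44 : R) :=
  r * C42 * C14 * C33 - C41 * C14 * C33 * C22
            + C42 * C24 * C31 * C13 - C42 * C24 * C33 * C11
            - C44 * C31 * C13 * C22 + C44 * C33 * C22 * C11.


Lemma kp_Bm C11 C13 C14 r C22 C24 C31 C33 C41 C42 C44 s :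
  let c1 := cc1 C11 C13 C14 r C22 C24 C31 C33 C41 C42 C44 in
  let c2 := cc2 C11 C13 C14 r C22 C24 C31 C33 C41 C42 C44 in
  let c3 := cc3 C11 C13 C14 r C22 C24 C31 C33 C41 C42 C44 in
  let c4 := cc4 C11 C13 C14 r C22 C24 C31 C33 C41 C42 C44 in
  let M := Bm C11 C13 C14 r C22 C24 C31 C33 C41 C42 C44 s in
  kp1 M = c1 - 4 * s /\
  kp2 M = c2 - 3 * c1 * s + 6 * s ^ 2 /\
  kp3 M = c3 - 2 * c2 * s + 3 * c1 * s ^ 2 - 4 * s ^ 3 /\
  kp4 M = c4 - c3 * s + c2 * s ^ 2 - c1 * s ^ 3 + s ^ 4.
Proof.
  intros. unfold M, c1, c2, c3, c4, Bm, cc1, cc2, cc3, cc4, kp1, kp2, kp3, kp4, m2, m3; simpl.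
  repeat split; ring.
Qed.

Lemma sigma_exists C11 C13 C14 r C22 C24 C31 C33 C41 C42 C44 :
  let c1 := cc1 C11 C13 C14 r C22 C24 C31 C33 C41 C42 C44 in
  let c2 := cc2 C11 C13 C14 r C22 C24 C31 C33 C41 C42 C44 in
  let c3 := cc3 C11 C13 C14 r C22 C24 C31 C33 C41 C42 C44 in
  let c4 := cc4 C11 C13 C14 r C22 C24 C31 C33 C41 C42 C44 in
  0 < c1 -> 0 < c1 * c2 - c3 -> 0 < c1 * c2 * c3 - c3 ^ 2 - c1 ^ 2 * c4 -> 0 < c4 ->
  exists s, 0 < s /\ RH (Bm C11 C13 C14 r C22 C24 C31 C33 C41 C42 C44 s).
Proof.
  intros c1 c2 c3 c4 H1 H2 H3 H4.
  set (d1 := fun s => c1 - 4 * s).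
  set (d2 := fun s => c2 - 3 * c1 * s + 6 * s ^ 2).
  set (d3 := fun s => c3 - 2 * c2 * s + 3 * c1 * s ^ 2 - 4 * s ^ 3).
  set (d4 := fun s => c4 - c3 * s + c2 * s ^ 2 - c1 * s ^ 3 + s ^ 4).
  destruct (cont_pos d1) as [n1 [Hn1 P1]]; [unfold d1; reg | unfold d1; lra|].
  destruct (cont_pos (fun s => d1 s * d2 s - d3 s)) as [n2 [Hn2 P2]];
    [unfold d1, d2, d3; reg | unfold d1, d2, d3; simpl; nra|].
  destruct (cont_pos (fun s => d3 s * (d1 s * d2 s - d3 s) - d1 s ^ 2 * d4 s)) as [n3 [Hn3 P3]];
    [unfold d1, d2, d3, d4; reg | unfold d1, d2, d3, d4; simpl; nra|].
  destruct (cont_pos d4) as [n4 [Hn4 P4]]; [unfold d4; reg | unfold d4; simpl; nra|].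
  set (s := Rmin (Rmin n1 n2) (Rmin n3 n4) / 2).
  assert (Hs0 : 0 < s).
  { unfold s. apply Rdiv_lt_0_compat; [|lra]. repeat apply Rmin_pos; assumption. }
  assert (Hs1 : s < n1 /\ s < n2 /\ s < n3 /\ s < n4).
  { unfold s. pose proof (Rmin_l (Rmin n1 n2) (Rmin n3 n4)). pose proof (Rmin_r (Rmin n1 n2) (Rmin n3 n4)).
    pose proof (Rmin_l n1 n2). pose proof (Rmin_r n1 n2). pose proof (Rmin_l n3 n4). pose proof (Rmin_r n3 n4).
    lra. }
  exists s. split; [exact Hs0|].
  destruct (kp_Bm C11 C13 C14 r C22 C24 C31 C33 C41 C42 C44 s) as (E1 & E2 & E3 & E4).
  unfold RH. rewrite E1, E2, E3, E4.
  fold c1 c2 c3 c4.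
  specialize (P1 s ltac:(lra)). specialize (P2 s ltac:(lra)). specialize (P3 s ltac:(lra)).
  specialize (P4 s ltac:(lra)). unfold d1, d2, d3, d4 in *. repeat split; assumption.
Qed.

Lemma sqrt_lt_sq x d : 0 <= x -> sqrt x < d -> x < d ^ 2.
Proof.
  intros Hx H. pose proof (sqrt_sqrt x Hx). pose proof (sqrt_pos x). simpl. nra.
Qed.

Lemma sq_lt_sqrt x d : 0 <= x -> 0 < d -> x < d ^ 2 -> sqrt x < d.
Proof.
  intros Hx Hd H. pose proof (sqrt_sqrt x Hx). pose proof (sqrt_pos x).
  destruct (Rlt_dec (sqrt x) d) as [h|h]; auto. exfalso. simpl in H. nra.
Qed.

Lemma abs_lt_sq a d : 0 < d -> a ^ 2 < d ^ 2 -> Rabs a < d.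
Proof.
  intros Hd H. rewrite <- pow2_abs in H. pose proof (Rabs_pos a).
  destruct (Rlt_dec (Rabs a) d) as [h|h]; auto. exfalso. simpl in H. nra.
Qed.

Lemma sq_le_of_abs x y : Rabs x <= y -> x ^ 2 <= y ^ 2.
Proof.
  intros H. rewrite <- pow2_abs. pose proof (Rabs_pos x). simpl. nra.
Qed.

Lemma lim_from_bound (x : R -> R) l A s : 0 < s -> 0 <= A ->
  (forall t, 0 <= t -> (x t - l) ^ 2 * exp (s * t) <= A) -> is_lim x p_infty l.
Proof.
  intros Hs HA H. apply is_lim_spec. intros eps. simpl.
  pose proof (cond_pos eps) as He.
  exists (A / (eps ^ 2 * s)). intros t Ht.
  assert (H0 : 0 <= A / (eps ^ 2 * s)).
  { apply Rmult_le_pos; [exact HA|]. apply Rlt_le. apply Rinv_0_lt_compat. apply Rmult_lt_0_compat; [apply pow_lt; exact He| exact Hs]. }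
  assert (Ht' : A < eps ^ 2 * s * t).
  { assert (Hp : 0 < eps ^ 2 * s) by (apply Rmult_lt_0_compat; [apply pow_lt; exact He| exact Hs]).
    assert (E : A = (A / (eps ^ 2 * s)) * (eps ^ 2 * s)).
    { unfold Rdiv; rewrite Rmult_assoc, Rinv_l, Rmult_1_r; [reflexivity| apply Rgt_not_eq; exact Hp]. }
    rewrite E. nra. }
  specialize (H t ltac:(lra)).
  pose proof (exp_ineq1_le (s * t)).
  apply abs_lt_sq; [exact He|].
  destruct (Rlt_dec ((x t - l) ^ 2) (eps ^ 2)) as [h|h]; auto. exfalso.
  assert (0 <= eps ^ 2) by (simpl; nra).
  assert (eps ^ 2 * exp (s * t) <= (x t - l) ^ 2 * exp (s * t)).
  { apply Rmult_le_compat_r; [left; apply exp_pos| lra]. }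
  nra.
Qed.

Lemma Rv_bound a b c d r1 r2 D1 D2 k :
  0 <= D1 -> 0 <= D2 -> 0 < k ->
  Rabs r1 <= D1 * (a ^ 2 + c ^ 2) -> Rabs r2 <= D2 * (a ^ 2 + d ^ 2) ->
  N4 (V4 (- r1 - r2) (- k * d * b) r1 (r2 + k * d * b))
    <= 4 * ((D1 + D2 + k) * (a ^ 2 + b ^ 2 + c ^ 2 + d ^ 2)) ^ 2.
Proof.
  intros HD1 HD2 Hk H1 H2.
  set (N := a ^ 2 + b ^ 2 + c ^ 2 + d ^ 2).
  assert (Ha : 0 <= a ^ 2) by apply pow2_ge_0.
  assert (Hb : 0 <= b ^ 2) by apply pow2_ge_0.
  assert (Hc : 0 <= c ^ 2) by apply pow2_ge_0.
  assert (Hd : 0 <= d ^ 2) by apply pow2_ge_0.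
  assert (R1 : Rabs r1 <= D1 * N) by (unfold N; nra).
  assert (R2 : Rabs r2 <= D2 * N) by (unfold N; nra).
  assert (R3 : Rabs (k * d * b) <= k * N).
  { rewrite !Rabs_mult, (Rabs_right k) by lra.
    assert (Rabs d * Rabs b <= N).
    { pose proof (pow2_abs d); pose proof (pow2_abs b). pose proof (pow2_ge_0 (Rabs d - Rabs b)).
      unfold N. nra. }
    nra. }
  assert (HN : 0 <= N) by (unfold N; lra).
  assert (B0 : Rabs (- r1 - r2) <= (D1 + D2 + k) * N).
  { eapply Rle_trans; [apply Rabs_triang|]. rewrite Rabs_Ropp. rewrite Rabs_Ropp. nra. }
  assert (B1 : Rabs (- k * d * b) <= (D1 + D2 + k) * N).
  { replace (- k * d * b) with (- (k * d * b)) by ring. rewrite Rabs_Ropp. nra. }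
  assert (B2 : Rabs r1 <= (D1 + D2 + k) * N) by nra.
  assert (B3 : Rabs (r2 + k * d * b) <= (D1 + D2 + k) * N).
  { eapply Rle_trans; [apply Rabs_triang|]. nra. }
  unfold N4; simpl p0; simpl p1; simpl p2; simpl p3.
  pose proof (sq_le_of_abs _ _ B0). pose proof (sq_le_of_abs _ _ B1).
  pose proof (sq_le_of_abs _ _ B2). pose proof (sq_le_of_abs _ _ B3).
  lra.
Qed.

Lemma v4_eq a b : p0 a = p0 b -> p1 a = p1 b -> p2 a = p2 b -> p3 a = p3 b -> a = b.
Proof. destruct a, b; simpl; intros; subst; reflexivity. Qed.

Lemma KW_ge M : RH M -> G0 M <= KW M.
Proof.
  intros HR. pose proof (WW_lower M e0 HR). pose proof (WW_upper M e0 HR).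
  assert (N4 e0 = 1) by (unfold N4, e0; simpl; ring). rewrite H1 in *. lra.
Qed.

Definition evec (S V1 I1 I2 : R -> R) (Ss Vs I1s I2s t : R) : v4 :=
  V4 (S t - Ss) (V1 t - Vs) (I1 t - I1s) (I2 t - I2s).

Theorem mainTheorem11
  (Lam mu r k g1 g2 v1 v2 : R) (F1 f1 F2 f2 : R -> R -> R)
  (Ss Vs I1s I2s : R) :
  Lam > 0 -> mu > 0 -> r > 0 -> k > 0 -> g1 > 0 -> g2 > 0 ->
  v1 >= 0 -> v2 >= 0 ->
  incidence_hyp F1 f1 -> incidence_hyp F2 f2 ->
  Ss > 0 -> Vs > 0 -> I1s > 0 -> I2s > 0 ->
  rhsS Lam mu r F1 F2 Ss I1s I2s = 0 ->
  rhsV mu r k Ss Vs I2s = 0 ->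
  rhsI1 mu g1 v1 F1 Ss I1s = 0 ->
  rhsI2 mu k g2 v2 F2 Ss Vs I2s = 0 ->
  let lam := r + mu in
  let a1 := g1 + v1 + mu in
  let a2 := g2 + v2 + mu in
  let C11 := - D1 F1 Ss I1s - D1 F2 Ss I2s - lam in
  let C13 := - D2 F1 Ss I1s in
  let C14 := - D2 F2 Ss I2s in
  let C22 := - mu - k * I2s in
  let C24 := - k * Vs in
  let C31 := D1 F1 Ss I1s in
  let C33 := D2 F1 Ss I1s - a1 in
  let C41 := D1 F2 Ss I2s in
  let C42 := k * I2s in
  let C44 := D2 F2 Ss I2s + k * Vs - a2 in
  let c1 := - C44 - C33 - C22 - C11 in
  let c2 := - C41 * C14 - C42 * C24 + C44 * C33 + C44 * C22 + C44 * C11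
            - C31 * C13 + C33 * C22 + C33 * C11 + C22 * C11 in
  let c3 := - r * C42 * C14 + C41 * C14 * C33 + C41 * C14 * C22
            + C42 * C24 * C33 + C42 * C24 * C11 + C44 * C31 * C13
            - C44 * C33 * C22 - C44 * C33 * C11 - C44 * C22 * C11
            + C31 * C13 * C22 - C33 * C22 * C11 in
  let c4 := r * C42 * C14 * C33 - C41 * C14 * C33 * C22
            + C42 * C24 * C31 * C13 - C42 * C24 * C33 * C11
            - C44 * C31 * C13 * C22 + C44 * C33 * C22 * C11 in
  c1 * c2 - c3 > 0 ->
  c1 * c2 * c3 - c3 ^ 2 - c1 ^ 2 * c4 > 0 ->
  locally_asymptotically_stable Lam mu r k g1 g2 v1 v2 F1 F2 Ss Vs I1s I2s.
Proof.
  intros HLam Hmu Hr Hk Hg1 Hg2 Hv1 Hv2 HF1 HF2 HSs HVs HI1s HI2s EqS EqV EqI1 EqI2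
    lam a1 a2 C11 C13 C14 C22 C24 C31 C33 C41 C42 C44 c1 c2 c3 c4 HR1 HR2.
  pose proof HF1 as (F1h1 & F1C2 & f1C2 & F1nn & _ & _ & F1H2 & _).
  pose proof HF2 as (F2h1 & F2C2 & f2C2 & F2nn & _ & _ & F2H2 & _).
  assert (Ef1 : f1 Ss I1s = a1).
  { unfold rhsI1 in EqI1. rewrite (F1h1 Ss I1s) in EqI1 by lra. unfold a1.
    apply (Rmult_eq_reg_l I1s); [|lra]. lra. }
  assert (Ef2 : f2 Ss I2s = a2 - k * Vs).
  { unfold rhsI2 in EqI2. rewrite (F2h1 Ss I2s) in EqI2 by lra. unfold a2.
    apply (Rmult_eq_reg_l I2s); [|lra]. lra. }
  assert (f2nn : 0 <= f2 Ss I2s) by (apply (F2nn Ss I2s); lra).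
  destruct (F1H2 Ss I1s ltac:(lra) ltac:(lra)) as [x1p y1n].
  destruct (F2H2 Ss I2s ltac:(lra) ltac:(lra)) as [x2p y2n].
  pose proof (D1_rel F1 f1 Ss I1s HF1 HSs HI1s) as ED11.
  pose proof (D1_rel F2 f2 Ss I2s HF2 HSs HI2s) as ED12.
  pose proof (D2_rel F1 f1 Ss I1s HF1 HSs HI1s) as ED21.
  pose proof (D2_rel F2 f2 Ss I2s HF2 HSs HI2s) as ED22.
  set (x1 := D1 f1 Ss I1s) in *. set (x2 := D1 f2 Ss I2s) in *.
  set (y1 := D2 f1 Ss I1s) in *. set (y2 := D2 f2 Ss I2s) in *.
  assert (Ha1 : 0 < a1) by (unfold a1; lra).
  assert (Hc1 : 0 < c1).
  { unfold c1, C44, C33, C22, C11, lam. rewrite ED11, ED12, ED21, ED22, Ef1, Ef2.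
    assert (0 < I1s * x1) by (apply Rmult_lt_0_compat; lra).
    assert (0 < I2s * x2) by (apply Rmult_lt_0_compat; lra).
    assert (I1s * y1 <= 0) by nra. assert (I2s * y2 <= 0) by nra.
    assert (0 < k * I2s) by nra. lra. }
  assert (Hc4 : 0 < c4).
  { set (p := - (I1s * y1)). set (q := - (I2s * y2)). set (fa := a2 - k * Vs).
    assert (Hp : 0 <= p) by (unfold p; nra). assert (Hq : 0 <= q) by (unfold q; nra).
    assert (Hfa : 0 <= fa) by (unfold fa; rewrite <- Ef2; exact f2nn).
    assert (HA : 0 < I1s * x1) by (apply Rmult_lt_0_compat; lra).
    assert (HB : 0 < I2s * x2) by (apply Rmult_lt_0_compat; lra).
    assert (E : c4 = p * q * (mu * (r + mu) + mu * k * I2s)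
       + (r * k * I2s * p + (I2s * x2) * (mu + k * I2s) * p) * fa
       + k ^ 2 * I2s * Vs * ((I1s * x1) * a1 + p * ((I2s * x2) + lam))
       + q * (I1s * x1) * (mu + k * I2s) * a1).
    { unfold c4, C11, C13, C14, C22, C24, C31, C33, C41, C42, C44, p, q, fa, lam.
      rewrite ED11, ED12, ED21, ED22, Ef1, Ef2. ring. }
    rewrite E.
    assert (0 <= p * q * (mu * (r + mu) + mu * k * I2s)).
    { apply Rmult_le_pos; [apply Rmult_le_pos; lra|].
      assert (0 < mu * (r + mu)) by (apply Rmult_lt_0_compat; lra).
      assert (0 < mu * k * I2s) by (repeat apply Rmult_lt_0_compat; lra). lra. }
    assert (0 <= (r * k * I2s * p + (I2s * x2) * (mu + k * I2s) * p) * fa).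
    { apply Rmult_le_pos; [|lra]. assert (0 <= r * k * I2s * p) by (repeat apply Rmult_le_pos; lra).
      assert (0 <= (I2s * x2) * (mu + k * I2s) * p).
      { apply Rmult_le_pos; [|lra]. apply Rmult_le_pos; [lra|].
        assert (0 < k * I2s) by (apply Rmult_lt_0_compat; lra). lra. }
      lra. }
    assert (0 < k ^ 2 * I2s * Vs * ((I1s * x1) * a1 + p * ((I2s * x2) + lam))).
    { apply Rmult_lt_0_compat; [repeat apply Rmult_lt_0_compat; try lra; apply pow_lt; lra|].
      assert (0 < (I1s * x1) * a1) by (apply Rmult_lt_0_compat; lra).
      assert (0 <= p * ((I2s * x2) + lam)) by (apply Rmult_le_pos; unfold lam; lra). lra. }
    assert (0 <= q * (I1s * x1) * (mu + k * I2s) * a1).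
    { assert (0 < k * I2s) by (apply Rmult_lt_0_compat; lra).
      apply Rmult_le_pos; [|lra]. apply Rmult_le_pos; [|lra]. apply Rmult_le_pos; lra. }
    lra. }
  destruct (sigma_exists C11 C13 C14 r C22 C24 C31 C33 C41 C42 C44) as [s [Hs HRH]];
    [exact Hc1 | exact HR1 | exact HR2 | exact Hc4 |].
  set (M := Bm C11 C13 C14 r C22 C24 C31 C33 C41 C42 C44 s) in *.
  destruct (RH_pos M HRH) as [Pm0 _].
  pose proof (KW_ge M HRH) as HKW.
  set (m0 := G0 M) in *.
  set (KWm := KW M) in *.
  destruct (taylor_rem F1 Ss I1s HSs HI1s F1C2) as [Dt1 [dl1 [HDt1 [Hdl1 Tb1]]]].
  destruct (taylor_rem F2 Ss I2s HSs HI2s F2C2) as [Dt2 [dl2 [HDt2 [Hdl2 Tb2]]]].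
  set (Dm := Dt1 + Dt2 + k).
  assert (HDm : 0 < Dm) by (unfold Dm; lra).
  set (rho2 := Rmin (Rmin (dl1 ^ 2) (dl2 ^ 2)) (s ^ 2 * m0 / (8 * KWm * Dm ^ 2 + 1))).
  assert (Hden : 0 < 8 * KWm * Dm ^ 2 + 1).
  { assert (0 <= KWm * Dm ^ 2) by (apply Rmult_le_pos; [lra| apply pow2_ge_0]). lra. }
  assert (Hrho : 0 < rho2).
  { unfold rho2. repeat apply Rmin_pos; try (apply pow_lt; lra).
    apply Rdiv_lt_0_compat; [|exact Hden]. apply Rmult_lt_0_compat; [apply pow_lt; lra| lra]. }
  assert (Hrho1 : rho2 <= dl1 ^ 2).
  { unfold rho2. eapply Rle_trans; [apply Rmin_l|]. apply Rmin_l. }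
  assert (Hrho2 : rho2 <= dl2 ^ 2).
  { unfold rho2. eapply Rle_trans; [apply Rmin_l|]. apply Rmin_r. }
  assert (Hrho3 : rho2 * (8 * KWm * Dm ^ 2 + 1) <= s ^ 2 * m0).
  { assert (rho2 <= s ^ 2 * m0 / (8 * KWm * Dm ^ 2 + 1)) by (unfold rho2; apply Rmin_r).
    apply (Rmult_le_compat_r (8 * KWm * Dm ^ 2 + 1)) in H; [|lra].
    replace (s ^ 2 * m0 / (8 * KWm * Dm ^ 2 + 1) * (8 * KWm * Dm ^ 2 + 1)) with (s ^ 2 * m0) in H;
      [exact H|]. field. apply Rgt_not_eq; exact Hden. }
  assert (core : forall S V1 I1 I2 : R -> R,
    is_solution Lam mu r k g1 g2 v1 v2 F1 F2 S V1 I1 I2 ->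
    KWm * N4 (evec S V1 I1 I2 Ss Vs I1s I2s 0) < m0 * rho2 ->
    forall t, 0 <= t ->
      m0 * N4 (evec S V1 I1 I2 Ss Vs I1s I2s t) * exp (s / 2 * t)
        <= KWm * N4 (evec S V1 I1 I2 Ss Vs I1s I2s 0)).
  { intros S V1 I1 I2 Hsol H0.
    set (e := evec S V1 I1 I2 Ss Vs I1s I2s).
    set (ev := fun t => V4 (rhsS Lam mu r F1 F2 (S t) (I1 t) (I2 t)) (rhsV mu r k (S t) (V1 t) (I2 t))
                           (rhsI1 mu g1 v1 F1 (S t) (I1 t)) (rhsI2 mu k g2 v2 F2 (S t) (V1 t) (I2 t))).
    assert (Hder : forall t, 0 <= t -> is_derive (fun u => WW M (e u)) t (2 * DB M (e t) (ev t))).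
    { intros t Ht. destruct (Hsol t Ht) as (dS & dV & dI1 & dI2).
      apply WW_derive; unfold e, ev, evec; simpl.
      - replace (rhsS Lam mu r F1 F2 (S t) (I1 t) (I2 t)) with (rhsS Lam mu r F1 F2 (S t) (I1 t) (I2 t) - 0) by ring.
        apply isd_minus; [exact dS| apply isd_const].
      - replace (rhsV mu r k (S t) (V1 t) (I2 t)) with (rhsV mu r k (S t) (V1 t) (I2 t) - 0) by ring.
        apply isd_minus; [exact dV| apply isd_const].
      - replace (rhsI1 mu g1 v1 F1 (S t) (I1 t)) with (rhsI1 mu g1 v1 F1 (S t) (I1 t) - 0) by ring.
        apply isd_minus; [exact dI1| apply isd_const].
      - replace (rhsI2 mu k g2 v2 F2 (S t) (V1 t) (I2 t)) with (rhsI2 mu k g2 v2 F2 (S t) (V1 t) (I2 t) - 0) by ring.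
        apply isd_minus; [exact dI2| apply isd_const]. }
    assert (Hlow : forall t, 0 <= t -> m0 * N4 (e t) <= WW M (e t)).
    { intros t _. apply WW_lower; exact HRH. }
    assert (Hn : forall t, 0 <= t -> 0 <= N4 (e t)).
    { intros t _. unfold N4. pose proof (pow2_ge_0 (p0 (e t))). pose proof (pow2_ge_0 (p1 (e t))).
      pose proof (pow2_ge_0 (p2 (e t))). pose proof (pow2_ge_0 (p3 (e t))). lra. }
    assert (Hneg : forall t, 0 <= t -> N4 (e t) < rho2 ->
                   2 * DB M (e t) (ev t) <= - (s / 2) * WW M (e t)).
    { intros t Ht HN.
      set (aS := S t - Ss). set (aV := V1 t - Vs). set (aI1 := I1 t - I1s). set (aI2 := I2 t - I2s).
      assert (EN : N4 (e t) = aS ^ 2 + aV ^ 2 + aI1 ^ 2 + aI2 ^ 2) by reflexivity.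
      pose proof (pow2_ge_0 aS). pose proof (pow2_ge_0 aV). pose proof (pow2_ge_0 aI1). pose proof (pow2_ge_0 aI2).
      assert (BS1 : Rabs aS < dl1) by (apply abs_lt_sq; [lra|]; lra).
      assert (BI1 : Rabs aI1 < dl1) by (apply abs_lt_sq; [lra|]; lra).
      assert (BS2 : Rabs aS < dl2) by (apply abs_lt_sq; [lra|]; lra).
      assert (BI2 : Rabs aI2 < dl2) by (apply abs_lt_sq; [lra|]; lra).
      pose proof (Tb1 (S t) (I1 t) BS1 BI1) as R1b.
      pose proof (Tb2 (S t) (I2 t) BS2 BI2) as R2b.
      fold aS aI1 aI2 in R1b, R2b.
      set (rr1 := F1 (S t) (I1 t) - F1 Ss I1s - D1 F1 Ss I1s * aS - D2 F1 Ss I1s * aI1) in *.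
      set (rr2 := F2 (S t) (I2 t) - F2 Ss I2s - D1 F2 Ss I2s * aS - D2 F2 Ss I2s * aI2) in *.
      set (Rv := V4 (- rr1 - rr2) (- k * aI2 * aV) rr1 (rr2 + k * aI2 * aV)).
      assert (Eev : ev t = vadd (mv M (e t)) (vadd (vsc (- s) (e t)) Rv)).
      { apply v4_eq; unfold ev, e, evec, Rv, rr1, rr2, aS, aV, aI1, aI2, M, Bm, mv, vadd, vsc; simpl;
          unfold rhsS, rhsV, rhsI1, rhsI2 in *;
          unfold C11, C13, C14, C22, C24, C31, C33, C41, C42, C44, lam, a1, a2; lra. }
      pose proof (Rv_bound aS aV aI1 aI2 rr1 rr2 Dt1 Dt2 k HDt1 HDt2 Hk R1b R2b) as HRv.
      fold Dm in HRv. rewrite <- EN in HRv.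
      rewrite Eev, DB_add, DB_add, DB_sc, DB_diag.
      pose proof (DB_neg M (e t) HRH) as Hneg1.
      pose proof (DB_amgm M (e t) Rv s HRH Hs) as Ham.
      pose proof (WW_upper M Rv HRH) as HWR. fold KWm in HWR.
      pose proof (Hlow t Ht) as HL.
      set (N := N4 (e t)) in *. set (W := WW M (e t)) in *.
      assert (HN0 : 0 <= N) by (apply Hn; exact Ht).
      assert (S1 : WW M Rv <= KWm * (4 * (Dm * N) ^ 2)).
      { eapply Rle_trans; [exact HWR|]. apply Rmult_le_compat_l; [lra| exact HRv]. }
      assert (S2 : (Dm * N) ^ 2 <= Dm ^ 2 * rho2 * N).
      { replace ((Dm * N) ^ 2) with (Dm ^ 2 * (N * N)) by ring.
        rewrite Rmult_assoc. apply Rmult_le_compat_l; [apply pow2_ge_0|]. nra. }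
      assert (S3 : KWm * (4 * (Dm * N) ^ 2) <= 4 * (KWm * Dm ^ 2 * rho2) * N).
      { replace (4 * (KWm * Dm ^ 2 * rho2) * N) with (KWm * (4 * (Dm ^ 2 * rho2 * N))) by ring.
        apply Rmult_le_compat_l; lra. }
      assert (S4 : 8 * (KWm * Dm ^ 2 * rho2) <= s ^ 2 * m0) by nra.
      assert (S5 : WW M Rv <= s ^ 2 / 2 * W).
      { assert (4 * (KWm * Dm ^ 2 * rho2) * N <= s ^ 2 * m0 / 2 * N) by (apply Rmult_le_compat_r; lra).
        assert (s ^ 2 * m0 / 2 * N <= s ^ 2 / 2 * W).
        { replace (s ^ 2 * m0 / 2 * N) with (s ^ 2 / 2 * (m0 * N)) by (field).
          apply Rmult_le_compat_l; [|lra]. assert (0 <= s ^ 2) by apply pow2_ge_0. lra. }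
        lra. }
      assert (S6 : WW M Rv / s <= s / 2 * W).
      { apply (Rmult_le_reg_l s); [exact Hs|].
        replace (s * (WW M Rv / s)) with (WW M Rv) by (field; apply Rgt_not_eq; exact Hs).
        replace (s * (s / 2 * W)) with (s ^ 2 / 2 * W) by (field). exact S5. }
      lra. }
    assert (Hphi0 : WW M (e 0) < m0 * rho2).
    { pose proof (WW_upper M (e 0) HRH). fold KWm in H. unfold e in *. lra. }
    intros t Ht.
    pose proof (dyn (fun u => WW M (e u)) (fun u => 2 * DB M (e u) (ev u)) (fun u => N4 (e u))
       (s / 2) m0 rho2 ltac:(lra) Pm0 Hrho Hder Hn Hlow Hneg Hphi0 t Ht) as Hd.
    simpl in Hd.
    pose proof (WW_upper M (e 0) HRH). fold KWm in H.
    pose proof (Hlow t Ht). pose proof (exp_pos (s / 2 * t)).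
    assert (m0 * N4 (e t) * exp (s / 2 * t) <= WW M (e t) * exp (s / 2 * t))
      by (apply Rmult_le_compat_r; lra).
    unfold e in *. lra. }
  assert (HKWp : 0 < KWm) by lra.
  assert (HN4 : forall x, 0 <= N4 x).
  { intros x. unfold N4. pose proof (pow2_ge_0 (p0 x)). pose proof (pow2_ge_0 (p1 x)).
    pose proof (pow2_ge_0 (p2 x)). pose proof (pow2_ge_0 (p3 x)). lra. }
  assert (Hdist : forall S V1 I1 I2 t,
    dist4 (S t) (V1 t) (I1 t) (I2 t) Ss Vs I1s I2s = sqrt (N4 (evec S V1 I1 I2 Ss Vs I1s I2s t))).
  { intros. reflexivity. }
  split.
  - intros eps Heps.
    set (del2 := Rmin (m0 * rho2) (m0 * eps ^ 2) / KWm).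
    assert (Hdel2 : 0 < del2).
    { unfold del2. apply Rdiv_lt_0_compat; [|lra]. apply Rmin_pos; apply Rmult_lt_0_compat; try lra.
      apply pow_lt; lra. }
    exists (sqrt del2). split; [apply sqrt_lt_R0; exact Hdel2|].
    intros S V1 I1 I2 Hsol _ _ _ _ Hd0 t Ht.
    rewrite Hdist in Hd0 |- *.
    apply sqrt_lt_sq in Hd0; [|apply HN4].
    rewrite pow2_sqrt in Hd0 by lra.
    assert (HK0 : KWm * N4 (evec S V1 I1 I2 Ss Vs I1s I2s 0) < Rmin (m0 * rho2) (m0 * eps ^ 2)).
    { unfold del2 in Hd0. apply (Rmult_lt_compat_l KWm) in Hd0; [|lra].
      replace (KWm * (Rmin (m0 * rho2) (m0 * eps ^ 2) / KWm)) with (Rmin (m0 * rho2) (m0 * eps ^ 2)) in Hd0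
        by (field; apply Rgt_not_eq; exact HKWp). exact Hd0. }
    pose proof (Rmin_l (m0 * rho2) (m0 * eps ^ 2)). pose proof (Rmin_r (m0 * rho2) (m0 * eps ^ 2)).
    pose proof (core S V1 I1 I2 Hsol ltac:(lra) t Ht) as Hc.
    apply sq_lt_sqrt; [apply HN4 | exact Heps |].
    pose proof (exp_ineq1_le (s / 2 * t)).
    assert (0 <= s / 2 * t) by (apply Rmult_le_pos; lra).
    pose proof (HN4 (evec S V1 I1 I2 Ss Vs I1s I2s t)).
    assert (m0 * N4 (evec S V1 I1 I2 Ss Vs I1s I2s t) <= m0 * N4 (evec S V1 I1 I2 Ss Vs I1s I2s t) * exp (s / 2 * t)).
    { rewrite <- (Rmult_1_r (m0 * N4 _)) at 1. apply Rmult_le_compat_l; [apply Rmult_le_pos; lra| lra]. }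
    apply (Rmult_lt_reg_l m0); [exact Pm0|]. lra.
  - set (del2 := m0 * rho2 / KWm).
    assert (Hdel2 : 0 < del2).
    { unfold del2. apply Rdiv_lt_0_compat; [|lra]. apply Rmult_lt_0_compat; lra. }
    exists (sqrt del2). split; [apply sqrt_lt_R0; exact Hdel2|].
    intros S V1 I1 I2 Hsol _ _ _ _ Hd0.
    rewrite Hdist in Hd0.
    apply sqrt_lt_sq in Hd0; [|apply HN4].
    rewrite pow2_sqrt in Hd0 by lra.
    assert (HK0 : KWm * N4 (evec S V1 I1 I2 Ss Vs I1s I2s 0) < m0 * rho2).
    { unfold del2 in Hd0. apply (Rmult_lt_compat_l KWm) in Hd0; [|lra].
      replace (KWm * (m0 * rho2 / KWm)) with (m0 * rho2) in Hd0
        by (field; apply Rgt_not_eq; exact HKWp). exact Hd0. }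
    pose proof (core S V1 I1 I2 Hsol HK0) as Hc.
    set (A := KWm * N4 (evec S V1 I1 I2 Ss Vs I1s I2s 0) / m0).
    assert (HA : 0 <= A).
    { unfold A. apply Rmult_le_pos; [apply Rmult_le_pos; [lra| apply HN4]| left; apply Rinv_0_lt_compat; lra]. }
    assert (Hb : forall t, 0 <= t -> N4 (evec S V1 I1 I2 Ss Vs I1s I2s t) * exp (s / 2 * t) <= A).
    { intros t Ht. specialize (Hc t Ht). unfold A.
      apply (Rmult_le_reg_l m0); [exact Pm0|].
      replace (m0 * (KWm * N4 (evec S V1 I1 I2 Ss Vs I1s I2s 0) / m0)) with
        (KWm * N4 (evec S V1 I1 I2 Ss Vs I1s I2s 0)) by (field; apply Rgt_not_eq; exact Pm0).
      lra. }
    assert (Hs2 : 0 < s / 2) by lra.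
    repeat split.
    + apply (lim_from_bound S Ss A (s / 2) Hs2 HA). intros t Ht. specialize (Hb t Ht).
      pose proof (exp_pos (s / 2 * t)). unfold N4, evec in Hb; simpl in Hb.
      pose proof (pow2_ge_0 (V1 t - Vs)). pose proof (pow2_ge_0 (I1 t - I1s)). pose proof (pow2_ge_0 (I2 t - I2s)).
      nra.
    + apply (lim_from_bound V1 Vs A (s / 2) Hs2 HA). intros t Ht. specialize (Hb t Ht).
      pose proof (exp_pos (s / 2 * t)). unfold N4, evec in Hb; simpl in Hb.
      pose proof (pow2_ge_0 (S t - Ss)). pose proof (pow2_ge_0 (I1 t - I1s)). pose proof (pow2_ge_0 (I2 t - I2s)).
      nra.
    + apply (lim_from_bound I1 I1s A (s / 2) Hs2 HA). intros t Ht. specialize (Hb t Ht).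
      pose proof (exp_pos (s / 2 * t)). unfold N4, evec in Hb; simpl in Hb.
      pose proof (pow2_ge_0 (V1 t - Vs)). pose proof (pow2_ge_0 (S t - Ss)). pose proof (pow2_ge_0 (I2 t - I2s)).
      nra.
    + apply (lim_from_bound I2 I2s A (s / 2) Hs2 HA). intros t Ht. specialize (Hb t Ht).
      pose proof (exp_pos (s / 2 * t)). unfold N4, evec in Hb; simpl in Hb.
      pose proof (pow2_ge_0 (V1 t - Vs)). pose proof (pow2_ge_0 (I1 t - I1s)). pose proof (pow2_ge_0 (S t - Ss)).
      nra.
Qed.
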